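(* Let $\{\epsilon_n\}_{n\ge1}$ be a sequence of positive real numbers and $\{a_n\}_{n\ge1}\subset\mathbb C$. For a sequence $\{a'_n\}_{n\ge 1}\subset\mathbb C$ define rational functions $r_n\colon\overline{\mathbb C}\to\overline{\mathbb C}$ recursively by $r_0(z)=z$, $r_1(z)=\frac{\epsilon_1}{z-a'_1}$, and $$r_{n+2}(z)=r_n(z)+\frac{\epsilon_{n+2}}{r_{n+1}(z)-a'_{n+2}},\qquad n\ge0.$$ Then for every sequence $\{\eta_n\}_{n\ge1}$ of positive numbers there is a sequence $\{a'_n\}_{n\ge1}\subset\mathbb C$ with $|a'_n-a_n|<\eta_n$ for all $n$ such that, for the corresponding $r_n$: (i) for every $n\ge0$, $r_n$ and $r_{n+1}$ have no common pole, and $r_n^{-1}(\infty)\subsetneq r_{n+2}^{-1}(\infty)$; in particular $\infty$ is a pole of $r_n$ exactly when $n$ is even; (ii) for every $n\ge 0$, $r_n$ has exactly $k_n$ poles, all simple; consequently the equation $r_n(z)=a'_{n+1}$ has exactly $k_n$ solutions, all distinct.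
   Context: $\{k_n\}_{n\ge0}$ denotes the Fibonacci sequence: $k_0=k_1=1$, $k_{n+2}=k_{n+1}+k_n$. Poles are counted in $\overline{\mathbb C}$ (including possibly $\infty$). *)

(* Defs.v *)
From HB Require Import structures.
From mathcomp Require Import all_boot all_order all_algebra.
From mathcomp Require Import fraction.
From mathcomp Require Import reals.
From mathcomp.real_closed Require Import complex.
Set Implicit Arguments. Unset Strict Implicit. Unset Printing Implicit Defensive.
Import Order.TTheory GRing.Theory Num.Theory.
Local Open Scope ring_scope.

Notation "x %:F" := (@FracField.tofrac _ x).
Local Open Scope complex_scope.
Local Open Scope ring_scope.

Fixpoint fib (n : nat) : nat :=
  match n with
  | 0 => 1
  | 1 => 1
  | (m.+1 as n').+1 => (fib n' + fib m)%N
  end.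

Definition ratf (R : realType) := {fraction {poly R[i]}}.

Definition ratC (R : realType) (c : R[i]) : ratf R := (c%:P)%:F.
Definition ratX (R : realType) : ratf R := ('X : {poly R[i]})%:F.

Fixpoint rpair (R : realType) (eps : nat -> R) (a : nat -> R[i]) (n : nat)
  : ratf R * ratf R :=
  match n with
  | 0 => (ratX R, ratC (eps 1%N)%:C / (ratX R - ratC (a 1%N)))
  | m.+1 => let (u, v) := rpair eps a m in
            (v, u + ratC (eps m.+2)%:C / (v - ratC (a m.+2)))
  end.

Definition rfun (R : realType) (eps : nat -> R) (a : nat -> R[i]) (n : nat)
  : ratf R := (rpair eps a n).1.

(* Points of the Riemann sphere: Some c (c in C) or None (= infinity). *)
Definition sphere (R : realType) := option R[i].

Definition is_rep (R : realType) (f : ratf R) (p q : {poly R[i]}) : Prop :=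
  coprimep p q /\ q != 0 /\ f = p%:F / q%:F.

Definition is_pole (R : realType) (f : ratf R) (z : sphere R) : Prop :=
  exists p q, is_rep f p q /\
    match z with
    | Some c => root q c
    | None => (size q < size p)%N
    end.

Definition is_simple_pole (R : realType) (f : ratf R) (z : sphere R) : Prop :=
  exists p q, is_rep f p q /\
    match z with
    | Some c => mup c q = 1%N
    | None => size p = (size q).+1
    end.

Definition is_zero (R : realType) (f : ratf R) (z : sphere R) : Prop :=
  exists p q, is_rep f p q /\
    match z with
    | Some c => root p c
    | None => (size p < size q)%N
    end.

Definition is_simple_zero (R : realType) (f : ratf R) (z : sphere R) : Prop :=
  exists p q, is_rep f p q /\
    match z with
    | Some c => mup c p = 1%N
    | None => size q = (size p).+1
    end.

Definition has_exactly (R : realType) (P : sphere R -> Prop) (k : nat) : Prop :=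
  exists s : seq (sphere R), uniq s /\ size s = k /\ forall z, P z <-> z \in s.

(* Main.v *)
Require Import Defs.
From HB Require Import structures.
From mathcomp Require Import all_boot all_order all_algebra.
From mathcomp Require Import fraction.
From mathcomp Require Import reals.
From mathcomp.real_closed Require Import complex.
From mathcomp Require Import all_field ring zify.
Set Implicit Arguments. Unset Strict Implicit. Unset Printing Implicit Defensive.
Import Order.TTheory GRing.Theory Num.Theory.
Local Open Scope complex_scope.
Local Open Scope ring_scope.

Section ClosedGen.
Variable F : closedFieldType.
Implicit Types p q : {poly F}.

Definition rootsl p : seq F := sval (closed_field_poly_normal p).

Lemma rootsl_eq p : p = lead_coef p *: \prod_(z <- rootsl p) ('X - z%:P).
Proof. exact: (svalP (closed_field_poly_normal p)). Qed.

Lemma rootsl_root p x : p != 0 -> root p x = (x \in rootsl p).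
Proof.
move=> p0; rewrite {1}(rootsl_eq p) rootZ ?lead_coef_eq0 //.
by rewrite root_prod_XsubC.
Qed.

Lemma rootsl_size p : p != 0 -> size (rootsl p) = (size p).-1.
Proof.
move=> p0; rewrite {2}(rootsl_eq p) size_scale ?lead_coef_eq0 //.
by rewrite size_prod_XsubC.
Qed.

Lemma separable_uniq p : separable_poly p -> uniq (rootsl p).
Proof.
move=> sp; have p0 : p != 0 by apply: separable_poly_neq0.
rewrite -separable_prod_XsubC -(@eqp_separable _ p) //.
by rewrite {1}(rootsl_eq p) eqp_scale ?lead_coef_eq0.
Qed.

Lemma separable_mup p x : separable_poly p -> root p x -> mup x p = 1%N.
Proof.
move=> sp rx; have p0 : p != 0 by apply: separable_poly_neq0.
have u := separable_uniq sp.
rewrite {1}(rootsl_eq p) -mul_polyC mupMr; last first.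
  by rewrite rootC lead_coef_eq0.
by rewrite mu_prod_XsubC count_uniq_mem // -rootsl_root // rx.
Qed.

Lemma coprimep_noroot p q : (forall x, root p x -> root q x -> False) -> coprimep p q.
Proof.
move=> H; rewrite /coprimep; apply/negPn/negP => /closed_rootP [x].
by rewrite root_gcd => /andP [] /H.
Qed.

End ClosedGen.


Section Rep.
Variable R : realType.
Implicit Types f : ratf R.

Lemma rep_eqp f p q p' q' : is_rep f p q -> is_rep f p' q' -> p %= p' /\ q %= q'.
Proof.
move=> [cpq [q0 ->]] [cpq' [q0' e]].
have q0F : q%:F != 0 by rewrite tofrac_eq0.
have q0F' : q'%:F != 0 by rewrite tofrac_eq0.
have E : p * q' = p' * q.
  apply/eqP; rewrite -tofrac_eq !tofracM.
  by rewrite -(eqr_div _ _ q0F q0F') e.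
have cqp : coprimep q p by rewrite coprimep_sym.
have cqp' : coprimep q' p' by rewrite coprimep_sym.
split; apply/andP; split.
- by rewrite -(Gauss_dvdpl _ cpq) -E dvdp_mulr.
- by rewrite -(Gauss_dvdpl _ cpq') E dvdp_mulr.
- by rewrite -(Gauss_dvdpr _ cqp) E dvdp_mull.
- by rewrite -(Gauss_dvdpr _ cqp') -E dvdp_mull.
Qed.

Lemma pole_some f p q c : is_rep f p q -> is_pole f (Some c) <-> root q c.
Proof.
move=> r; split; last by move=> h; exists p, q.
by move=> [p' [q' [r' h]]]; have [_ /eqp_root ->] := rep_eqp r r'.
Qed.

Lemma pole_none f p q : is_rep f p q -> is_pole f None <-> (size q < size p)%N.
Proof.
move=> r; split; last by move=> h; exists p, q.
by move=> [p' [q' [r' h]]]; have [/eqp_size -> /eqp_size ->] := rep_eqp r r'.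
Qed.

Lemma zero_some f p q c : is_rep f p q -> is_zero f (Some c) <-> root p c.
Proof.
move=> r; split; last by move=> h; exists p, q.
by move=> [p' [q' [r' h]]]; have [/eqp_root -> _] := rep_eqp r r'.
Qed.

Lemma zero_none f p q : is_rep f p q -> is_zero f None <-> (size p < size q)%N.
Proof.
move=> r; split; last by move=> h; exists p, q.
by move=> [p' [q' [r' h]]]; have [/eqp_size -> /eqp_size ->] := rep_eqp r r'.
Qed.
End Rep.


Section Pick.
Variable R : realType.

Definition cand (t : R[i]) (e : R) (k : nat) : R[i] := t + (e / (k.+2)%:R)%:C.
Definition pickc (t : R[i]) (e : R) (L : seq R[i]) : R[i] :=
  let s := mkseq (cand t e) (size L).+1 in nth t s (find (fun x => x \notin L) s).

Lemma pickc_spec t e L : 0 < e -> pickc t e L \notin L /\ `|pickc t e L - t| < e%:C.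
Proof.
move=> e0; rewrite /pickc; set s := mkseq _ _.
have inj : injective (cand t e).
  move=> i j; rewrite /cand => /addrI /complexI /eqP.
  rewrite eqr_div ?pnatr_eq0 // => /eqP /(mulfI (lt0r_neq0 e0)) /eqP.
  by rewrite eqr_nat => /eqP [].
have us : uniq s by apply: mkseq_uniq.
have hs : has (fun x => x \notin L) s.
  apply/negPn/negP; rewrite -all_predC => /allP al.
  have sub : {subset s <= L} by move=> x /al /=; rewrite negbK.
  by have := uniq_leq_size us sub; rewrite size_mkseq ltnn.
split; first by have := nth_find t hs.
have : nth t s (find (fun x => x \notin L) s) \in s by rewrite mem_nth // -has_find.
move=> /mapP [k _ ->]; rewrite /cand addrC addKr.
have hp : 0 <= e / (k.+2)%:R by rewrite divr_ge0 ?ltW.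
rewrite ger0_norm ?ler0c // ltcR ltr_pdivrMr ?ltr0n //.
by rewrite ltr_pMr // ltr1n.
Qed.
End Pick.


Lemma deriv_eq0_size (N : numDomainType) (p : {poly N}) : p^`() = 0 -> (size p <= 1)%N.
Proof.
move=> d0; rewrite leqNgt; apply/negP => sp.
have p0 : p != 0 by rewrite -size_poly_gt0 (ltn_trans _ sp).
have : p^`()`_(size p).-2 = 0 by rewrite d0 coef0.
rewrite coef_deriv; have -> : ((size p).-2.+1 = (size p).-1)%N.
  by case: (size p) sp => [|[|n]].
move/eqP; rewrite mulrn_eq0 -lead_coefE lead_coef_eq0 (negbTE p0) orbF.
by case: (size p) sp => [|[|n]].
Qed.

Definition Wr (F : fieldType) (P Q : {poly F}) := P^`() * Q - P * Q^`().

Lemma Wr_neq0 (N : numFieldType) (P Q : {poly N}) : coprimep P Q ->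
  (1 < size P)%N || (1 < size Q)%N -> Wr P Q != 0.
Proof.
move=> cpq hs; apply/negP => /eqP; rewrite /Wr => /eqP; rewrite subr_eq0 => /eqP E.
have cqp : coprimep Q P by rewrite coprimep_sym.
have dP : P %| P^`().
  by rewrite -(Gauss_dvdpl _ cpq) E dvdp_mulr.
have dQ : Q %| Q^`().
  by rewrite -(Gauss_dvdpr _ cqp) -E dvdp_mull.
have z : forall p : {poly N}, p %| p^`() -> p^`() = 0.
  move=> p dp; have [->|p0] := eqVneq p 0; first by rewrite deriv0.
  apply/eqP; apply/negPn/negP => d0.
  by have := dvdp_leq d0 dp; rewrite leqNgt lt_size_deriv.
move: hs; rewrite !ltnNge (deriv_eq0_size (z _ dP)) (deriv_eq0_size (z _ dQ)).
by [].
Qed.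

Lemma Wr_horner (F : fieldType) (P Q : {poly F}) x :
  (Wr P Q).[x] = P^`().[x] * Q.[x] - P.[x] * Q^`().[x].
Proof. by rewrite /Wr hornerD hornerN !hornerM. Qed.

Lemma frac_step (K : fieldType) (pm qm p q c e d : K) : qm != 0 -> q != 0 ->
  d = p - c * q -> d != 0 -> pm / qm + e / (p / q - c) = (pm * d + e * (q * qm)) / (qm * d).
Proof.
move=> qm0 q0 -> d0.
have h : p / q - c = (p - c * q) / q by field.
rewrite h; field; rewrite q0 qm0 d0 //.
Qed.

Lemma frac_sub (K : fieldType) (p q c : K) : q != 0 -> p / q - c = (p - c * q) / q.
Proof. by move=> q0; field. Qed.


Lemma rfunSS (R : realType) (e : nat -> R) (b : nat -> R[i]) m :
  rfun e b m.+2 = rfun e b m + ratC (e m.+2)%:C / (rfun e b m.+1 - ratC (b m.+2)).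
Proof. by rewrite /rfun /=; case: (rpair e b m) => u v. Qed.

Section Main.
Variable R : realType.
Variables (eps : nat -> R) (a : nat -> R[i]) (eta : nat -> R).
Hypothesis epsP : forall n, (0 < n)%N -> 0 < eps n.
Hypothesis etaP : forall n, (0 < n)%N -> 0 < eta n.

Definition bad (P Q Q1 : {poly R[i]}) : seq R[i] :=
  0 :: [seq P.[x] / Q.[x] | x <- rootsl (Wr P Q) ++ rootsl Q1].

Definition stT := ({poly R[i]} * {poly R[i]} * {poly R[i]} * {poly R[i]})%type.
Definition nexta (m : nat) (s : stT) : R[i] :=
  pickc (a m.+1) (eta m.+1) (bad s.1.2 s.2 s.1.1.2).

Fixpoint st (n : nat) : stT :=
  match n with
  | 0 => (0, 1, 'X, 1)
  | m.+1 => let s := st m in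
            let D := s.1.2 - nexta m s *: s.2 in
            (s.1.2, s.2, s.1.1.1 * D + (eps m.+1)%:C *: (s.2 * s.1.1.2), s.1.1.2 * D)
  end.

Definition a' (n : nat) : R[i] := if n is m.+1 then nexta m (st m) else 0.

Definition Pm n := (st n).1.1.1.
Definition Qm n := (st n).1.1.2.
Definition Pn n := (st n).1.2.
Definition Qn n := (st n).2.
Definition Dn n := Pn n - a' n.+1 *: Qn n.

Lemma st_S n : st n.+1 = (Pn n, Qn n, Pm n * Dn n + (eps n.+1)%:C *: (Qn n * Qm n), Qm n * Dn n).
Proof. by []. Qed.

Lemma a'_bad n : a' n.+1 \notin bad (Pn n) (Qn n) (Qm n) /\ `|a' n.+1 - a n.+1| < (eta n.+1)%:C.
Proof. exact: pickc_spec (etaP _). Qed.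

Definition rf n := rfun eps a' n.
Definition rfm n := if n is m.+1 then rf m else 0.

Lemma rf_S n : rf n.+1 = rfm n + ratC (eps n.+1)%:C / (rf n - ratC (a' n.+1)).
Proof.
case: n => [|m]; first by rewrite /rf /rfun /= add0r.
exact: rfunSS.
Qed.

Fixpoint fibm n := if n is m.+1 then fib m else 0%N.

Lemma fibS n : fib n.+1 = (fib n + fibm n)%N.
Proof. by case: n => [|n] //=; rewrite addn0. Qed.

Record Inv n : Prop := {
  iq0 : Qn n != 0;
  iqm0 : Qm n != 0;
  icop : coprimep (Pn n) (Qn n);
  icopm : coprimep (Pm n) (Qm n);
  icopq : coprimep (Qn n) (Qm n);
  isep : separable_poly (Qn n);
  isepm : separable_poly (Qm n);
  isz : if odd n then (size (Pn n) < size (Qn n))%N else size (Pn n) == (size (Qn n)).+1;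
  iszm : if odd n then size (Pm n) == (size (Qm n)).+1 else (size (Pm n) < size (Qm n))%N;
  ifib : ((size (Qn n)).-1 + ~~ odd n)%N = fib n;
  ifibm : ((size (Qm n)).-1 + odd n)%N = fibm n;
  irf : rf n = (Pn n)%:F / (Qn n)%:F;
  irfm : rfm n = (Pm n)%:F / (Qm n)%:F
}.

Lemma Inv0 : Inv 0.
Proof.
split => //=; rewrite /Pn /Qn /Pm /Qm /=.
- exact: oner_neq0.
- exact: oner_neq0.
- exact: coprimep1.
- exact: coprimep1.
- exact: coprimep1.
- by rewrite unlock coprime1p.
- by rewrite unlock coprime1p.
- by rewrite size_polyX size_poly1.
- by rewrite size_poly0 size_poly1.
- by rewrite size_poly1.
- by rewrite size_poly1.
- by rewrite tofrac1 divr1.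
- by rewrite tofrac0 mul0r.
Qed.

Lemma fib_gt0 n : (0 < fib n)%N.
Proof.
suff : (0 < fib n)%N /\ (0 < fib n.+1)%N by case.
elim: n => [|k [h1 h2]] //; split => //.
by rewrite fibS addn_gt0 h2.
Qed.

Lemma Dfacts n : Inv n -> [/\ Dn n != 0,
  size (Dn n) = (if odd n then size (Qn n) else (size (Qn n)).+1),
  coprimep (Qn n) (Dn n), coprimep (Qm n) (Dn n) & separable_poly (Dn n)].
Proof.
move=> I.
have [nb _] := a'_bad n; move: nb; rewrite /bad inE negb_or => /andP [c0 nb].
set c := a' n.+1 in c0 nb *.
have key : forall x, x \in rootsl (Wr (Pn n) (Qn n)) ++ rootsl (Qm n) ->
    c = (Pn n).[x] / (Qn n).[x] -> False.
  by move=> x hx e; move/negP: nb; apply; rewrite e; apply/mapP; exists x.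
have Qx : forall x, (Dn n).[x] = 0 -> (Qn n).[x] != 0.
  move=> x; rewrite /Dn !hornerE => h; apply/negP => /eqP q0.
  move: h; rewrite q0 mulr0 subr0 => /eqP p0.
  by have := coprimep_root (icop I) p0; rewrite q0 eqxx.
have cx : forall x, (Dn n).[x] = 0 -> c = (Pn n).[x] / (Qn n).[x].
  move=> x h; have qx := Qx x h; move: h; rewrite /Dn !hornerE => /eqP.
  by rewrite subr_eq0 => /eqP ->; rewrite mulfK.
have szc : size (c *: Qn n) = size (Qn n) by rewrite size_scale.
have szD : size (Dn n) = (if odd n then size (Qn n) else (size (Qn n)).+1).
  have := isz I; case: (odd n) => h.
    by rewrite /Dn addrC size_polyDl size_polyN szc.
  by rewrite /Dn size_polyDl (eqP h) // size_polyN szc.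
have D0 : Dn n != 0.
  by rewrite -size_poly_gt0 szD; case: (odd n); rewrite // size_poly_gt0 (iq0 I).
split => //.
- have -> : Dn n = (- c%:P) * Qn n + Pn n by rewrite /Dn mulNr mul_polyC addrC.
  by rewrite coprimep_addl_mul coprimep_sym (icop I).
- apply: coprimep_noroot => x rq rd.
  apply: (key x); last by apply: cx; apply/eqP.
  by rewrite mem_cat -(rootsl_root x (iqm0 I)) rq orbT.
- rewrite unlock; apply: coprimep_noroot => x rd rd'.
  have hd : (Dn n).[x] = 0 by apply/eqP.
  apply: (key x); last exact: cx x hd.
  have W0 : Wr (Pn n) (Qn n) != 0.
    apply: Wr_neq0; first exact: (icop I).
    have hq := iq0 I; rewrite -size_poly_gt0 in hq.
    have hf := fib_gt0 n; have hz := isz I; have hfi := ifib I.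
    case: (odd n) hz hfi => /= hz hfi.
      apply/orP; right; rewrite addn0 in hfi; move: hf; rewrite -hfi.
      by case: (size (Qn n)) => [|[|k]].
    by apply/orP; left; rewrite (eqP hz) ltnS.
  rewrite mem_cat -(rootsl_root x W0) /root.
  move: rd'; rewrite /Dn derivB derivZ /root hornerD hornerN hornerZ => /eqP.
  move=> /subr0_eq e1.
  move: hd; rewrite /Dn hornerD hornerN hornerZ => /subr0_eq e2.
  by rewrite Wr_horner e1 e2 mulrAC subrr eqxx.
Qed.

Lemma Pm_S n : Pm n.+1 = Pn n. Proof. by []. Qed.
Lemma Qm_S n : Qm n.+1 = Qn n. Proof. by []. Qed.
Lemma Pn_S n : Pn n.+1 = Pm n * Dn n + (eps n.+1)%:C *: (Qn n * Qm n). Proof. by []. Qed.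
Lemma Qn_S n : Qn n.+1 = Qm n * Dn n. Proof. by []. Qed.

Ltac nlia := try rewrite /reverse_coercion; rewrite /=; lia.

Lemma smul (p q : {poly R[i]}) : p != 0 -> q != 0 -> size (p * q) = (size p + size q).-1.
Proof. exact: size_mul. Qed.

Lemma sscale (c : R[i]) (p : {poly R[i]}) : c != 0 -> size (c *: p) = size p.
Proof. exact: size_scale. Qed.

Lemma InvS n : Inv n -> Inv n.+1.
Proof.
move=> I; have [D0 szD cQD cQmD sD] := Dfacts I.
have e0 : (eps n.+1)%:C != 0.
  by rewrite (inj_eq (@complexI _)) lt0r_neq0 // epsP.
set e := (eps n.+1)%:C in e0 *.
have q0 := iq0 I; have qm0 := iqm0 I.
have szq : (0 < size (Qn n))%N by rewrite size_poly_gt0.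
have szqm : (0 < size (Qm n))%N by rewrite size_poly_gt0.
split; rewrite ?Pm_S ?Qm_S ?Pn_S ?Qn_S.
- by rewrite mulf_neq0.
- exact: q0.
- rewrite coprimepMr; apply/andP; split.
    rewrite coprimep_sym scalerAl addrC coprimep_addl_mul coprimepMr.
    by rewrite coprimep_sym (icopm I) cQmD.
  rewrite coprimep_sym coprimep_addl_mul coprimepZr // coprimepMr.
  by rewrite !(coprimep_sym (Dn n)) cQD cQmD.
- exact: (icop I).
- by rewrite coprimepMl coprimep_sym (icopq I) coprimep_sym cQD.
- by rewrite separable_mul (isepm I) sD cQmD.
- exact: (isep I).
- have hm := iszm I; rewrite /= -/e.
  have sze : size (e *: (Qn n * Qm n)) = (size (Qn n) + size (Qm n)).-1.
    by rewrite sscale // smul.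
  case: (odd n) hm szD => /= hm szD'.
    have pm0 : Pm n != 0 by rewrite -size_poly_gt0 (eqP hm).
    rewrite size_polyDl; rewrite (smul pm0 D0) ?(smul qm0 D0) ?(eqP hm) ?szD' //.
      by apply/eqP; move: szq szqm; nlia.
    by rewrite ?sscale // ?smul // ?szD' ?(eqP hm); move: szq szqm; nlia.
  rewrite smul // szD'.
  apply: (leq_ltn_trans (size_polyD _ _)); rewrite gtn_max sze.
  apply/andP; split; last by move: szq szqm; nlia.
  apply: (leq_ltn_trans (size_mul_leq _ _)); move: szD' szq szqm hm; nlia.
- by have := isz I; rewrite /=; case: (odd n).
- rewrite smul // szD fibS -(ifib I) -(ifibm I) /=.
  by move: szq szqm; case: (odd n) => /=; nlia.
- by have := ifib I; rewrite /=; case: (odd n).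
- rewrite rf_S (irfm I) (irf I) /ratC -!mul_polyC !tofracD !tofracM.
  apply: frac_step.
  + by rewrite tofrac_eq0.
  + by rewrite tofrac_eq0.
  + by rewrite /Dn -mul_polyC tofracB tofracM.
  + by rewrite tofrac_eq0.
- exact: (irf I).
Qed.

Lemma InvAll n : Inv n.
Proof. by elim: n => [|n IH]; [exact: Inv0 | exact: InvS]. Qed.

Lemma rep_n n : is_rep (rfun eps a' n) (Pn n) (Qn n).
Proof. by have I := InvAll n; split; [exact: icop I | split; [exact: iq0 I | exact: irf I]]. Qed.

Lemma rep_z n : is_rep (rfun eps a' n - ratC (a' n.+1)) (Dn n) (Qn n).
Proof.
have I := InvAll n; have [D0 szD cQD cQmD sD] := Dfacts I.
split; first by rewrite coprimep_sym.
split; first exact: iq0 I.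
have q0 : (Qn n)%:F != 0 by rewrite tofrac_eq0 (iq0 I).
rewrite -/(rf n) (irf I) /Dn /ratC -mul_polyC tofracB tofracM.
exact: frac_sub.
Qed.

Lemma Qn_SS n : Qn n.+2 = Qn n * Dn n.+1.
Proof. by []. Qed.

Lemma szQ_gt0 n : (0 < size (Qn n))%N.
Proof. by rewrite size_poly_gt0 (iq0 (InvAll n)). Qed.

Lemma P_nocommon n z : ~ (is_pole (rfun eps a' n) z /\ is_pole (rfun eps a' n.+1) z).
Proof.
case: z => [c|] [].
  rewrite (pole_some _ (rep_n n)) (pole_some _ (rep_n n.+1)) => r1 r2.
  have := coprimep_root (icopq (InvAll n.+1)) r2.
  by rewrite Qm_S; move/negP; apply.
rewrite (pole_none (rep_n n)) (pole_none (rep_n n.+1)).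
have := isz (InvAll n); have := isz (InvAll n.+1); rewrite /=.
case: (odd n) => /= + + h1 h2.
  by move=> /eqP e1 e2; move: h1; rewrite ltnNge ltnW.
by move=> e1 /eqP e2; move: h2; rewrite ltnNge ltnW.
Qed.

Lemma P_sub n z : is_pole (rfun eps a' n) z -> is_pole (rfun eps a' n.+2) z.
Proof.
case: z => [c|].
  rewrite (pole_some _ (rep_n n)) (pole_some _ (rep_n n.+2)) Qn_SS rootM.
  by move=> ->.
rewrite (pole_none (rep_n n)) (pole_none (rep_n n.+2)).
have := isz (InvAll n); have := isz (InvAll n.+2); rewrite /= negbK.
case: (odd n) => /= + + h.
  by move=> _ e; move: h; rewrite ltnNge ltnW.
by move=> /eqP -> _; rewrite ltnSn.
Qed.

Lemma P_new n : exists z, is_pole (rfun eps a' n.+2) z /\ ~ is_pole (rfun eps a' n) z.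
Proof.
have I := InvAll n.+1; have [D0 szD cQD cQmD sD] := Dfacts I.
have : size (Dn n.+1) != 1%N.
  rewrite szD; have hfi := ifib I; have hf := fib_gt0 n.+1; have hq := szQ_gt0 n.+1.
  move: hfi hf hq; case: (odd n.+1) => hfi hf hq; last by move: hq; case: (size (Qn n.+1)).
  by move: hf hq; rewrite -hfi; case: (size (Qn n.+1)) => [|[|k]].
move/closed_rootP => [x rx]; exists (Some x).
rewrite (pole_some _ (rep_n n)) (pole_some _ (rep_n n.+2)) Qn_SS rootM rx orbT.
split => // rq.
rewrite Qm_S in cQmD.
by have := coprimep_root cQmD rq => /negP; apply; exact: rx.
Qed.

Lemma P_inf n : is_pole (rfun eps a' n) None <-> ~~ odd n.
Proof.
rewrite (pole_none (rep_n n)); have := isz (InvAll n).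
case: (odd n) => /= h; split => //.
  by move=> h2; move: h; rewrite ltnNge ltnW.
by rewrite (eqP h).
Qed.
Lemma some_inj_mem (rs : seq R[i]) x : (Some x \in map Some rs) = (x \in rs).
Proof. by rewrite mem_map //; move=> u v [] . Qed.

Lemma none_notin (rs : seq R[i]) : (None \in map Some rs) = false.
Proof. by apply/negP => /mapP [y]. Qed.

Lemma Q_poles n : has_exactly (is_pole (rfun eps a' n)) (fib n).
Proof.
have I := InvAll n.
exists (map Some (rootsl (Qn n)) ++ (if odd n then [::] else [:: None])).
split; [|split].
- rewrite cat_uniq map_inj_uniq; last by move=> u v [].
  rewrite separable_uniq ?(isep I) //=.
  by case: (odd n) => //=; rewrite orbF none_notin.
- rewrite size_cat size_map rootsl_size ?(iq0 I) // -(ifib I).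
  by case: (odd n).
- case=> [c|].
    rewrite (pole_some _ (rep_n n)) mem_cat some_inj_mem -rootsl_root ?(iq0 I) //.
    by case: (odd n) => /=; rewrite ?orbF ?in_cons ?in_nil ?orbF.
  rewrite P_inf mem_cat none_notin /=.
  by case: (odd n) => /=; split.
Qed.

Lemma Q_simple n z : is_pole (rfun eps a' n) z -> is_simple_pole (rfun eps a' n) z.
Proof.
have I := InvAll n; move=> hp; exists (Pn n), (Qn n); split; first exact: rep_n.
case: z hp => [c|].
  by rewrite (pole_some _ (rep_n n)) => r; apply: separable_mup (isep I) r.
rewrite P_inf; have := isz I; case: (odd n) => //= h _.
exact/eqP.
Qed.

Lemma Z_count n : has_exactly (is_zero (rfun eps a' n - ratC (a' n.+1))) (fib n).
Proof.
have I := InvAll n; have [D0 szD cQD cQmD sD] := Dfacts I.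
exists (map Some (rootsl (Dn n))).
split; [|split].
- by rewrite map_inj_uniq ?separable_uniq //; move=> u v [].
- rewrite size_map rootsl_size // szD -(ifib I).
  have := szQ_gt0 n.
  by case: (odd n) => /=; nlia.
- case=> [c|].
    by rewrite (zero_some _ (rep_z n)) some_inj_mem -rootsl_root.
  rewrite (zero_none (rep_z n)) none_notin szD; split => //.
  by case: (odd n) => //; rewrite ?ltnn // ltnNge ltnW.
Qed.

Lemma Z_simple n z : is_zero (rfun eps a' n - ratC (a' n.+1)) z ->
  is_simple_zero (rfun eps a' n - ratC (a' n.+1)) z.
Proof.
have I := InvAll n; have [D0 szD cQD cQmD sD] := Dfacts I.
move=> hz; exists (Dn n), (Qn n); split; first exact: rep_z.
case: z hz => [c|].
  by rewrite (zero_some _ (rep_z n)) => r; apply: separable_mup sD r.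
rewrite (zero_none (rep_z n)) szD.
by case: (odd n); rewrite ?ltnn // ltnNge ltnW.
Qed.
End Main.

Theorem lemma2p2 (R : realType) (eps : nat -> R) (a : nat -> R[i]) :
  (forall n, (0 < n)%N -> 0 < eps n) ->
  forall eta : nat -> R, (forall n, (0 < n)%N -> 0 < eta n) ->
  exists a' : nat -> R[i],
    (forall n, (0 < n)%N -> `|a' n - a n| < (eta n)%:C) /\
    (forall n : nat,
      (forall z, ~ (is_pole (rfun eps a' n) z /\ is_pole (rfun eps a' n.+1) z)) /\
      (forall z, is_pole (rfun eps a' n) z -> is_pole (rfun eps a' n.+2) z) /\
      (exists z, is_pole (rfun eps a' n.+2) z /\ ~ is_pole (rfun eps a' n) z) /\
      (is_pole (rfun eps a' n) None <-> ~~ odd n)) /\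
    (forall n : nat,
      has_exactly (is_pole (rfun eps a' n)) (fib n) /\
      (forall z, is_pole (rfun eps a' n) z -> is_simple_pole (rfun eps a' n) z) /\
      has_exactly (is_zero (rfun eps a' n - ratC (a' n.+1))) (fib n) /\
      (forall z, is_zero (rfun eps a' n - ratC (a' n.+1)) z ->
                 is_simple_zero (rfun eps a' n - ratC (a' n.+1)) z)).
Proof.
move=> hE eta hT; exists (a' eps a eta); split; [|split].
- by case=> [|n] // _; exact: (a'_bad eps a hT n).2.
- move=> n; split; first exact: P_nocommon hE hT n.
  split; first exact: P_sub hE hT n.
  split; first exact: P_new hE hT n.
  exact: P_inf hE hT n.
- move=> n; split; first exact: Q_poles hE hT n.
  split; first exact: Q_simple hE hT n.
  split; first exact: Z_count hE hT n.
  exact: Z_simple hE hT n.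
Qed.
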